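(* Let ${}^{+}Q^H_k(x)$ be the coefficient polynomials of the linear transformation $x^n\mapsto H_n(x)$ and ${}^{-}Q^H_k(x)$ the coefficient polynomials of the linear transformation $x^n\mapsto H_n(-x)$ on $\mathbb{R}[x]$. Then for all $k\ge0$, ${}^{-}Q^H_k(x)={}^{+}Q^H_k(-3x)$.
   Context: $H_n$ denotes the $n$th physicist Hermite polynomial, $H_n(x)=n!\sum_{m=0}^{\lfloor n/2\rfloor}\frac{(-1)^m}{m!(n-2m)!}(2x)^{n-2m}$. Every linear operator $T\colon\mathbb{C}[x]\to\mathbb{C}[x]$ has a unique representation $T=\sum_{k=0}^\infty \frac{Q_k(x)}{k!}D^k$ with $D=d/dx$ and polynomials $Q_k(x)$, called the coefficient polynomials of $T$. *)

(* Defs.v *)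
From HB Require Import structures.
From mathcomp Require Import all_boot all_order all_algebra.
Set Implicit Arguments. Unset Strict Implicit. Unset Printing Implicit Defensive.
Import Order.TTheory GRing.Theory Num.Theory.
Local Open Scope ring_scope.

Definition hermite (R : realFieldType) (n : nat) : {poly R} :=
  \sum_(m < n./2.+1)
     ((n`!)%:R / ((m`!)%:R * ((n - 2 * m)`!)%:R) * (-1) ^+ m)
       *: ((2%:R *: 'X) ^+ (n - 2 * m)).

Definition Tplus (R : realFieldType) (p : {poly R}) : {poly R} :=
  \sum_(i < size p) p`_i *: hermite R i.

Definition Tminus (R : realFieldType) (p : {poly R}) : {poly R} :=
  \sum_(i < size p) p`_i *: (hermite R i \Po (- 'X)).

(* Q is the sequence of coefficient polynomials of T :
   T = sum_{k>=0} Q_k(x)/k! D^k, i.e. for every polynomial p,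
   T p = sum_k Q_k * p^(k) / k!  (the sum is finite: p^(k) = 0 for k >= size p). *)
Definition coeff_polys (R : realFieldType) (T : {poly R} -> {poly R})
    (Q : nat -> {poly R}) : Prop :=
  forall p : {poly R},
    T p = \sum_(k < size p) ((k`!)%:R)^-1 *: (Q k * p^`(k)).

(* Main.v *)
Require Import Defs.
From HB Require Import structures.
From mathcomp Require Import all_boot all_order all_algebra.
From mathcomp Require Import ring lra zify.
Set Implicit Arguments. Unset Strict Implicit. Unset Printing Implicit Defensive.
Import Order.TTheory GRing.Theory Num.Theory.
Local Open Scope ring_scope.

Section S.
Variable R : realFieldType.

Lemma fact_neq0 (k : nat) : (k`!)%:R != 0 :> R.
Proof. by rewrite pnatr_eq0 -lt0n fact_gt0. Qed.

Lemma uniqQ (T : {poly R} -> {poly R}) (Q1 Q2 : nat -> {poly R}) :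
  coeff_polys T Q1 -> coeff_polys T Q2 -> forall k, Q1 k = Q2 k.
Proof.
move=> H1 H2; elim/ltn_ind => k IH.
have := H1 'X^k; rewrite H2 size_polyXn !big_ord_recr /=.
rewrite (eq_bigr (fun i : 'I_k => (i`!%:R)^-1 *: (Q1 i * ('X^k)^`(i)))); last first.
  by move=> i _; rewrite IH.
move/addrI; rewrite derivnXn subnn ffactnn expr0.
rewrite !mulr_natr -!scaler_nat !scalerA mulVf ?fact_neq0 // !scale1r.
by move=> ->.
Qed.

Lemma existQ (T : {poly R} -> {poly R}) (f Q : nat -> {poly R}) :
  (forall p, T p = \sum_(i < size p) p`_i *: f i) ->
  (forall n, f n = \sum_(k < n.+1) 'C(n,k)%:R *: (Q k * 'X^(n-k))) ->
  coeff_polys T Q.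
Proof.
move=> hT hf p; rewrite hT.
have hp : forall k, p^`(k) = \sum_(i < size p) p`_i *: ('X^(i-k) *+ i^_k).
  move=> k; rewrite -{1}(coefK p) poly_def linear_sum /=.
  by apply: eq_bigr => i _; rewrite linearZ /= derivnXn.
apply/esym; under eq_bigr => k _ do rewrite hp mulr_sumr scaler_sumr.
rewrite exchange_big /=; apply: eq_bigr => i _.
rewrite hf.
have hi : (i.+1 <= size p)%N by [].
rewrite (big_ord_widen (size p) (fun k => 'C(i,k)%:R *: (Q k * 'X^(i-k)))) //.
rewrite scaler_sumr [RHS]big_mkcond; apply: eq_bigr => k _ /=.
case: ifP => hk; last first.
  rewrite ffact_small ?mulr0n ?scaler0 ?mulr0 ?scaler0 // ltnNge -ltnS hk //=.
rewrite -scalerAr mulrnAr -(scaler_nat (R:=R)) !scalerA; congr (_ *: _).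
rewrite -bin_ffact natrM; field; exact: fact_neq0.
Qed.

Definition cG (n m : nat) : R :=
  (n`!)%:R / ((m`!)%:R * ((n - 2 * m)`!)%:R) * (-1) ^+ m.
Definition G (n : nat) : {poly R} :=
  \sum_(m < n./2.+1) cG n m *: 'X^(n - 2 * m).

Lemma compXn k (q : {poly R}) : 'X^k \Po q = q ^+ k.
Proof.
elim: k => [|k IH]; first by rewrite !expr0 -polyC1 comp_polyC.
by rewrite !exprS comp_polyM comp_polyX IH.
Qed.

Lemma hermiteG n : hermite R n = G n \Po ('X + 'X).
Proof.
rewrite /hermite /G linear_sum; apply: eq_bigr => m _.
by rewrite linearZ /= compXn scaler_nat mulr2n.
Qed.

Lemma half_lt m n : (m < n./2.+1)%N = (2 * m <= n)%N.
Proof. lia. Qed.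

Lemma uphalf_lt m n : (m < (uphalf n).+1)%N = (2 * m <= n.+1)%N.
Proof. rewrite uphalf_half; lia. Qed.


Lemma derivG n : (G n.+1)^`() = (n.+1)%:R *: G n.
Proof.
rewrite /G linear_sum scaler_sumr /=.
rewrite (big_ord_widen n.+2 (fun m => (cG n.+1 m *: 'X^(n.+1 - 2 * m))^`())); last lia.
rewrite (big_ord_widen n.+2 (fun m => (n.+1)%:R *: (cG n m *: 'X^(n - 2 * m)))); last lia.
rewrite big_mkcond [RHS]big_mkcond; apply: eq_bigr => m _ /=.
rewrite uphalf_lt half_lt derivZ derivXn.
have [h1|h1] := leqP (2 * m) n.
  have -> : (2 * m <= n.+1)%N by lia.
  rewrite subSn // /= -scaler_nat scalerA scalerA; congr (_ *: _).
  rewrite /cG subSn // factS natrM.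
  have := fact_neq0 m; have := fact_neq0 (n - 2 * m); have := fact_neq0 n.
  have : ((n - 2 * m).+1)%:R != 0 :> R by rewrite pnatr_eq0.
  move=> *; rewrite factS natrM.
  field; by rewrite !fact_neq0 /= addrC natr1 pnatr_eq0.
case: (leqP (2 * m) n.+1) => h2 //.
have -> : (n.+1 - 2 * m = 0)%N by lia.
by rewrite mulr0n scaler0.
Qed.


Lemma derivnG n i : (i <= n)%N -> (G n)^`(i) = (n ^_ i)%:R *: G (n - i).
Proof.
elim: i => [|i IH] hi; first by rewrite derivn0 ffactn0 scale1r subn0.
rewrite derivnS IH; last exact: ltnW.
rewrite derivZ -(subnSK hi) derivG scalerA.
by rewrite ffactnSr natrM subnSK.
Qed.

Lemma nderivnG n i : (i <= n)%N -> (G n)^`N(i) = ('C(n, i))%:R *: G (n - i).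
Proof.
move=> hi; have h := nderivn_def i (G n).
rewrite derivnG // -bin_ffact -(scaler_nat (R:=R)) in h.
apply: (@scalerI _ _ ((i`!)%:R) (fact_neq0 i)).
by rewrite scalerA -natrM mulnC -h scaler_nat.
Qed.

Lemma sizeG n : (size (G n) <= n.+1)%N.
Proof.
rewrite /G; elim/big_ind: _ => //.
- by rewrite size_poly0.
- by move=> x y hx hy; rewrite (leq_trans (size_polyD _ _)) // geq_max hx hy.
move=> m _; rewrite (leq_trans (size_scale_leq _ _)) // size_polyXn; lia.
Qed.

Lemma appellX n (a : {poly R}) :
  G n \Po (a + 'X) = \sum_(k < n.+1) 'C(n,k)%:R *: ((G k \Po a) * 'X^(n-k)).
Proof.
rewrite {1}/comp_poly (nderiv_taylor_wide (n := n.+1)); last first.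
- by rewrite size_map_polyC sizeG.
- exact: mulrC.
rewrite (reindex_inj rev_ord_inj) /=; apply: eq_bigr => i _.
have hi : (i <= n)%N by rewrite -ltnS.
rewrite subSS nderivn_map nderivnG ?leq_subr // subKn // bin_sub //.
by rewrite -/(comp_poly a _) comp_polyZ scalerAl.
Qed.


Lemma coefP : coeff_polys (@Tplus R) G.
Proof.
apply: (existQ (f := hermite R)) => // n.
by rewrite hermiteG appellX; apply: eq_bigr => k _; rewrite comp_polyXr.
Qed.

Lemma coefM : coeff_polys (@Tminus R) (fun k => G k \Po (- (3%:R *: 'X))).
Proof.
apply: (existQ (f := fun n => hermite R n \Po (- 'X))) => // n.
rewrite hermiteG -comp_polyA.
have -> : ('X + 'X) \Po (- 'X) = - (3%:R *: 'X) + 'X :> {poly R}.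
  rewrite comp_polyD comp_polyX scaler_nat; ring.
by rewrite appellX.
Qed.

End S.

Unset Implicit Arguments.

Theorem corollary4p2 (R : realFieldType) :
  (exists Qp : nat -> {poly R}, coeff_polys (@Tplus R) Qp) /\
  (exists Qm : nat -> {poly R}, coeff_polys (@Tminus R) Qm) /\
  (forall Qp Qm : nat -> {poly R},
     coeff_polys (@Tplus R) Qp -> coeff_polys (@Tminus R) Qm ->
     forall k : nat, Qm k = Qp k \Po (- (3%:R *: 'X))).
Proof.
split; first by exists (@G R); exact: coefP.
split; first by eexists; exact: coefM.
move=> Qp Qm hp hm k.
by rewrite (uniqQ hp (@coefP R)) (uniqQ hm (@coefM R)).
Qed.
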